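(* Let $a,b\in\mathbb{Q}$ be such that $f(x)=x^{12}+ax^6+b$ is irreducible over $\mathbb{Q}$, and let $\theta$ be a root of $f(x)$. Then for every $r\in\mathbb{Q}\setminus\mathbb{Q}^2$, we have $r\in\mathbb{Q}(\theta)^2$ if and only if at least one of $r(a^2-4b)$, $r(-a+2\sqrt{b})$, $r(-a-2\sqrt{b})$ lies in $\mathbb{Q}^2$.
   Context: For a field $K$, $K^2$ denotes the set of squares in $K$; $\mathbb{Q}^2$ is the set of rational squares. $\sqrt{b}$ denotes a fixed complex square root of $b$. *)

(* Defs.v *)
From HB Require Import structures.
From mathcomp Require Import all_boot all_order all_algebra all_field.
Set Implicit Arguments. Unset Strict Implicit. Unset Printing Implicit Defensive.
Import Order.TTheory GRing.Theory Num.Theory.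
Local Open Scope ring_scope.

Definition f12 (a b : rat) : {poly rat} := 'X^12 + a *: 'X^6 + b%:P.

Definition ratsq (r : rat) : Prop := exists q : rat, r = q ^+ 2.

Definition algC_in_Qsq (x : algC) : Prop := exists q : rat, x = (ratr q) ^+ 2.

Definition in_Qadj (theta x : algC) : Prop :=
  exists p q : {poly rat},
    (map_poly ratr q).[theta] != 0 /\
    x = (map_poly ratr p).[theta] / (map_poly ratr q).[theta].

(* Main.v *)
Require Import Defs.
From HB Require Import structures.
From mathcomp Require Import all_boot all_order all_algebra all_field.
From mathcomp Require Import ring lra zify.
Import Order.TTheory GRing.Theory Num.Theory.
Local Open Scope ring_scope.


Definition ev (p : {poly rat}) (x : algC) : algC := (map_poly ratr p).[x].

Lemma evD p q x : ev (p + q) x = ev p x + ev q x.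
Proof. by rewrite /ev rmorphD hornerD. Qed.
Lemma evM p q x : ev (p * q) x = ev p x * ev q x.
Proof. by rewrite /ev rmorphM hornerM. Qed.
Lemma evC c x : ev c%:P x = ratr c.
Proof. by rewrite /ev map_polyC hornerC. Qed.
Lemma evX x : ev 'X x = x.
Proof. by rewrite /ev map_polyX hornerX. Qed.
Lemma evXn n x : ev 'X^n x = x ^+ n.
Proof. by rewrite /ev map_polyXn hornerXn. Qed.
Lemma evN p x : ev (- p) x = - ev p x.
Proof. by rewrite /ev rmorphN hornerN. Qed.
Lemma evZ c p x : ev (c *: p) x = ratr c * ev p x.
Proof. by rewrite -mul_polyC evM evC. Qed.

Lemma size_f12 a b : size (f12 a b) = 13%N.
Proof.
rewrite /f12 -addrA size_polyDl ?size_polyXn //.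
rewrite (leq_ltn_trans (size_polyD _ _)) //.
rewrite gtn_max (leq_ltn_trans (size_scale_leq _ _)) ?size_polyXn //.
by rewrite (leq_ltn_trans (size_polyC_leq1 _)).
Qed.

Lemma ev_f12 a b x : ev (f12 a b) x = x ^+ 12 + ratr a * x ^+ 6 + ratr b.
Proof. by rewrite /f12 !evD evZ !evXn evC. Qed.

Lemma irr_div a b theta p :
  irreducible_poly (f12 a b) -> ev (f12 a b) theta = 0 -> ev p theta = 0 ->
  f12 a b %| p.
Proof.
move=> [_ irr] Hr Hp.
set g := gcdp (f12 a b) p.
have [Hs|Hs] := eqVneq (size g) 1%N.
  have : coprimep (f12 a b) p by rewrite coprimep_def Hs.
  case/Bezout_eq1_coprimepP => [[u v]] /= E.
  have := congr1 (fun q => ev q theta) E; rewrite evD !evM Hr Hp evC.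
  by rewrite !mulr0 addr0 rmorph1 => /eqP; rewrite eq_sym oner_eq0.
have := irr g Hs (dvdp_gcdl _ _).
by move=> /eqp_dvdl <-; apply: dvdp_gcdr.
Qed.


Lemma K12 a b theta (p : {poly rat}) :
  irreducible_poly (f12 a b) -> ev (f12 a b) theta = 0 ->
  (size p <= 12)%N -> ev p theta = 0 -> p = 0.
Proof.
move=> Hi Hr Hs Hp; apply/eqP; apply: contraT => Hn.
have := dvdp_leq Hn (irr_div _ _ _ _ Hi Hr Hp).
by rewrite size_f12 leqNgt ltnS Hs.
Qed.

Lemma ev_inv a b theta (q : {poly rat}) :
  irreducible_poly (f12 a b) -> ev (f12 a b) theta = 0 ->
  ev q theta != 0 -> exists v, ev v theta * ev q theta = 1.
Proof.
move=> [Hs irr] Hr Hq.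
set g := gcdp (f12 a b) q.
have [Hg|Hg] := eqVneq (size g) 1%N.
  have : coprimep (f12 a b) q by rewrite coprimep_def Hg.
  case/Bezout_eq1_coprimepP => [[u v]] /= E.
  exists v; have := congr1 (fun q => ev q theta) E; rewrite evD !evM Hr evC.
  by rewrite mulr0 add0r rmorph1.
have := irr g Hg (dvdp_gcdl _ _).
move=> /eqp_dvdl H; have : f12 a b %| q by rewrite -H dvdp_gcdr.
case/dvdpP => w Eq; move: Hq; by rewrite Eq evM Hr mulr0 eqxx.
Qed.

Lemma ev_comp (p : {poly rat}) n x : ev (p \Po 'X^n) x = ev p (x ^+ n).
Proof. by rewrite /ev map_comp_poly horner_comp map_polyXn hornerXn. Qed.

Lemma size_comp3 (p : {poly rat}) : (size p <= 4)%N -> (size (p \Po 'X^3) <= 10)%N.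
Proof.
move=> H; apply: leq_trans (size_comp_poly_leq _ _) _.
rewrite size_polyXn /=; case: (size p) H => [|[|[|[|[|]]]]] //.
Qed.

Lemma coefR3 (A B C : {poly rat}) :
  (size A <= 4)%N -> (size B <= 4)%N -> (size C <= 4)%N ->
  A \Po 'X^3 + 'X * (B \Po 'X^3) + 'X^2 * (C \Po 'X^3) = 0 ->
  [/\ A = 0, B = 0 & C = 0].
Proof.
move=> HA HB HC R0.
have E j : (A \Po 'X^3 + 'X * (B \Po 'X^3) + 'X^2 * (C \Po 'X^3))`_j = 0.
  by rewrite R0 coef0.
have Z (P : {poly rat}) : (size P <= 4)%N -> P`_0 = 0 -> P`_1 = 0 -> P`_2 = 0 -> P`_3 = 0 -> P = 0.
  move=> HP H0 H1 H2 H3; apply/polyP => i; rewrite coef0.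
  case: (ltnP i 4) => Hi; last by rewrite nth_default // (leq_trans HP).
  by case: i Hi => [|[|[|[|]]]].
have F j : (A \Po 'X^3 + 'X * (B \Po 'X^3) + 'X^2 * (C \Po 'X^3))`_j = 0 := E j.
split; apply: Z => //.
- have := F 0%N; rewrite !coefD coefXM coefXnM !coef_comp_poly_Xn //= /divn /= => H; by rewrite ?addr0 ?add0r in H.
- have := F 3%N; rewrite !coefD coefXM coefXnM !coef_comp_poly_Xn //= /divn /= => H; by rewrite ?addr0 ?add0r in H.
- have := F 6%N; rewrite !coefD coefXM coefXnM !coef_comp_poly_Xn //= /divn /= => H; by rewrite ?addr0 ?add0r in H.
- have := F 9%N; rewrite !coefD coefXM coefXnM !coef_comp_poly_Xn //= /divn /= => H; by rewrite ?addr0 ?add0r in H.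
- have := F 1%N; rewrite !coefD coefXM coefXnM !coef_comp_poly_Xn //= /divn /= => H; by rewrite ?addr0 ?add0r in H.
- have := F 4%N; rewrite !coefD coefXM coefXnM !coef_comp_poly_Xn //= /divn /= => H; by rewrite ?addr0 ?add0r in H.
- have := F 7%N; rewrite !coefD coefXM coefXnM !coef_comp_poly_Xn //= /divn /= => H; by rewrite ?addr0 ?add0r in H.
- have := F 10%N; rewrite !coefD coefXM coefXnM !coef_comp_poly_Xn //= /divn /= => H; by rewrite ?addr0 ?add0r in H.
- have := F 2%N; rewrite !coefD coefXM coefXnM !coef_comp_poly_Xn //= /divn /= => H; by rewrite ?addr0 ?add0r in H.
- have := F 5%N; rewrite !coefD coefXM coefXnM !coef_comp_poly_Xn //= /divn /= => H; by rewrite ?addr0 ?add0r in H.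
- have := F 8%N; rewrite !coefD coefXM coefXnM !coef_comp_poly_Xn //= /divn /= => H; by rewrite ?addr0 ?add0r in H.
- have := F 11%N; rewrite !coefD coefXM coefXnM !coef_comp_poly_Xn //= /divn /= => H; by rewrite ?addr0 ?add0r in H.
Qed.


Definition g4 (a b : rat) : {poly rat} := 'X^4 + a *: 'X^2 + b%:P.

Lemma size_g4 a b : size (g4 a b) = 5%N.
Proof.
rewrite /g4 -addrA size_polyDl ?size_polyXn //.
rewrite (leq_ltn_trans (size_polyD _ _)) //.
rewrite gtn_max (leq_ltn_trans (size_scale_leq _ _)) ?size_polyXn //.
by rewrite (leq_ltn_trans (size_polyC_leq1 _)).
Qed.

Lemma ev_g4 a b theta : ev (g4 a b) (theta ^+ 3) = ev (f12 a b) theta.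
Proof. by rewrite /g4 ev_f12 !evD evZ !evXn evC -!exprM. Qed.

Lemma red4 a b theta (p : {poly rat}) : ev (f12 a b) theta = 0 ->
  ev p (theta ^+ 3) = ev (p %% g4 a b) (theta ^+ 3) /\ (size (modp p (g4 a b)) <= 4)%N.
Proof.
move=> Hr; split.
  by rewrite {1}(divp_eq p (g4 a b)) evD evM ev_g4 Hr mulr0 add0r.
have : (size (modp p (g4 a b)) < size (g4 a b))%N.
  by rewrite ltn_modp -size_poly_gt0 size_g4.
by rewrite size_g4.
Qed.

Lemma sizeR3 (A B C : {poly rat}) :
  (size A <= 4)%N -> (size B <= 4)%N -> (size C <= 4)%N ->
  (size (A \Po 'X^3 + 'X * (B \Po 'X^3) + 'X^2 * (C \Po 'X^3))%R <= 12)%N.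
Proof.
move=> SA SB SC.
have h1 := size_comp3 _ SA; have h2 := size_comp3 _ SB; have h3 := size_comp3 _ SC.
have h4 := size_mul_leq 'X (B \Po 'X^3); have h5 := size_mul_leq 'X^2 (C \Po 'X^3).
rewrite size_polyX in h4; rewrite size_polyXn in h5.
apply: leq_trans (size_polyD _ _) _; rewrite geq_max; apply/andP; split; last by lia.
apply: leq_trans (size_polyD _ _) _; rewrite geq_max; apply/andP; split; lia.
Qed.

Lemma ind3 a b theta (A B C : {poly rat}) :
  irreducible_poly (f12 a b) -> ev (f12 a b) theta = 0 ->
  ev A (theta ^+ 3) + theta * ev B (theta ^+ 3) + theta ^+ 2 * ev C (theta ^+ 3) = 0 ->
  [/\ ev A (theta ^+ 3) = 0, ev B (theta ^+ 3) = 0 & ev C (theta ^+ 3) = 0].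
Proof.
move=> Hi Hr.
have [-> SA] := red4 _ _ _ A Hr; have [-> SB] := red4 _ _ _ B Hr; have [-> SC] := red4 _ _ _ C Hr.
set A' := A %% _; set B' := B %% _; set C' := C %% _ => H.
have R0 : A' \Po 'X^3 + 'X * (B' \Po 'X^3) + 'X^2 * (C' \Po 'X^3) = 0.
  apply: (K12 _ _ _ _ Hi Hr); first exact: sizeR3.
  by rewrite !evD !evM evX !ev_comp -H expr2.
rewrite /A' /B' /C'; by have [-> -> ->] := coefR3 _ _ _ SA SB SC R0; rewrite /ev map_poly0 horner0.
Qed.

Lemma rep3 (theta : algC) (P : {poly rat}) : exists A B C : {poly rat},
  ev P theta = ev A (theta ^+ 3) + theta * ev B (theta ^+ 3) + theta ^+ 2 * ev C (theta ^+ 3).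
Proof.
elim/poly_ind: P => [|P c [A [B [C E]]]].
  by exists 0, 0, 0; rewrite /ev !map_poly0 !horner0 !mulr0 !addr0.
exists (c%:P + 'X * C), A, B.
rewrite !evD !evM !evX !evC E; ring.
Qed.


Lemma ev0 x : ev 0 x = 0.
Proof. by rewrite /ev map_poly0 horner0. Qed.

Lemma ev2 x : ev 2%:R%:P x = 2%:R.
Proof. by rewrite evC rmorph_nat. Qed.

Lemma id_sq3 (theta x y z : algC) :
  x * x + 2%:R * theta ^+ 3 * y * z - (x + theta * y + theta ^+ 2 * z) ^+ 2 +
  theta * (2%:R * x * y + theta ^+ 3 * z * z) + theta ^+ 2 * (y * y + 2%:R * x * z) =
  0.
Proof. ring. Qed.

Lemma step3 a b theta (P : {poly rat}) (r : rat) :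
  irreducible_poly (f12 a b) -> ev (f12 a b) theta = 0 ->
  (ev P theta) ^+ 2 = ratr r -> exists A, ev P theta = ev A (theta ^+ 3).
Proof.
move=> Hi Hr Hy.
have [A [B [C E]]] := rep3 theta P.
set u := theta ^+ 3 in E *.
case: (ind3 _ _ _ (A * A + 2%:R%:P * 'X * B * C - r%:P)
   (2%:R%:P * A * B + 'X * C * C) (B * B + 2%:R%:P * A * C) Hi Hr) => [|_ e2 e3].
  rewrite !evD !evM !evN !ev2 !evX !evC -Hy E /u.
  move: (ev A _) (ev B _) (ev C _) => x y z; exact: id_sq3.
rewrite !evD !evM !ev2 !evX -/u in e2 e3.
set al := ev A u in E e2 e3 *; set be := ev B u in E e2 e3 *; set ga := ev C u in E e2 e3 *.
have [g0|gn0] := eqVneq ga 0.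
  have b0 : be = 0.
    by move: e3; rewrite g0 mulr0 addr0 -expr2 => /eqP; rewrite expf_eq0 /= => /eqP.
  by exists A; rewrite E g0 b0 !mulr0 !addr0.
exfalso.
have c3 : be ^+ 3 = u * ga ^+ 3.
  apply/eqP; rewrite -subr_eq0.
  have -> : be ^+ 3 - u * ga ^+ 3 = be * (be * be + 2%:R * al * ga) - ga * (2%:R * al * be + u * ga * ga) by ring.
  by rewrite e2 e3; apply/eqP; ring.
have : (theta * ga - be) * (theta ^+ 2 * ga ^+ 2 + theta * ga * be + be ^+ 2) = 0.
  have -> : (theta * ga - be) * (theta ^+ 2 * ga ^+ 2 + theta * ga * be + be ^+ 2)
     = u * ga ^+ 3 - be ^+ 3 by rewrite /u; ring.
  by rewrite c3 subrr.
move/eqP; rewrite mulf_eq0 => /orP [] /eqP H.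
  case: (ind3 _ _ _ (- B) C 0 Hi Hr) => [|_ H2 _].
    by rewrite evN ev0 mulr0 addr0 -/u -/be -/ga addrC.
  by move: gn0; rewrite /ga /u H2 eqxx.
case: (ind3 _ _ _ (B * B) (C * B) (C * C) Hi Hr) => [|_ _ H3].
  by rewrite !evM -/u -/ga -/be -[RHS]H; ring.
by move: H3; rewrite evM -/u -/ga => /eqP; rewrite mulf_eq0 orbb (negPf gn0).
Qed.


Lemma Hb_of a b (theta : algC) : ev (f12 a b) theta = 0 ->
  ratr b = - (theta ^+ 12 + ratr a * theta ^+ 6).
Proof. by rewrite ev_f12 => /eqP; rewrite addrC addr_eq0 => /eqP ->. Qed.

Lemma rep4 a b theta (P : {poly rat}) : ev (f12 a b) theta = 0 ->
  exists c0 d0 c1 d1 : rat, ev P (theta ^+ 3) =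
   ratr c0 + ratr d0 * theta ^+ 3 + ratr c1 * theta ^+ 6 + ratr d1 * theta ^+ 9.
Proof.
move=> Hr; have Hb := Hb_of _ _ _ Hr.
elim/poly_ind: P => [|P c [c0 [d0 [c1 [d1 E]]]]].
  by exists 0, 0, 0, 0; rewrite ev0 !rmorph0 !mul0r !addr0.
exists (c - b * d1), c0, (d0 - a * d1), c1.
rewrite evD evM E evX evC !rmorphB !rmorphM /= Hb.
move: (ratr c0) (ratr d0) (ratr c1) (ratr d1) (ratr c) (ratr a) => x0 x1 x2 x3 x4 x5.
ring.
Qed.

Lemma ind4 a b theta (c0 d0 c1 d1 : rat) :
  irreducible_poly (f12 a b) -> ev (f12 a b) theta = 0 ->
  ratr c0 + ratr d0 * theta ^+ 3 + ratr c1 * theta ^+ 6 + ratr d1 * theta ^+ 9 = 0 ->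
  [/\ c0 = 0, d0 = 0, c1 = 0 & d1 = 0].
Proof.
move=> Hi Hr H.
have P0 : c0%:P + d0 *: 'X^3 + c1 *: 'X^6 + d1 *: 'X^9 = 0 :> {poly rat}.
  apply: (K12 _ _ _ _ Hi Hr).
    apply: leq_trans (size_polyD _ _) _; rewrite geq_max; apply/andP; split; last first.
      by apply: leq_trans (size_scale_leq _ _) _; rewrite size_polyXn.
    apply: leq_trans (size_polyD _ _) _; rewrite geq_max; apply/andP; split; last first.
      by apply: leq_trans (size_scale_leq _ _) _; rewrite size_polyXn.
    apply: leq_trans (size_polyD _ _) _; rewrite geq_max; apply/andP; split; last first.
      by apply: leq_trans (size_scale_leq _ _) _; rewrite size_polyXn.
    by apply: leq_trans (size_polyC_leq1 _) _.
  by rewrite !evD !evZ !evXn evC.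
have F j := congr1 (fun p : {poly rat} => p`_j) P0.
have := F 0%N; have := F 3%N; have := F 6%N; have := F 9%N.
rewrite /= !coefD !coefZ !coefXn !coefC /=.
by rewrite !mulr0 !mulr1 !addr0 !add0r => -> -> -> ->.
Qed.


Lemma sqrt_cases (b s : rat) : b = s ^+ 2 ->
  sqrtC (ratr b : algC) = ratr s \/ sqrtC (ratr b : algC) = - ratr s.
Proof.
move=> Hb.
have : sqrtC (ratr b : algC) ^+ 2 == (ratr s) ^+ 2 by rewrite sqrtCK Hb rmorphXn.
by rewrite eqf_sqr => /orP [] /eqP; [left|right].
Qed.

Lemma eq_from0 (k : rat) {x y z : rat} : z = 0 -> x - y = k * z -> x = y.
Proof. by move=> -> /eqP; rewrite mulr0 subr_eq0 => /eqP. Qed.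

Lemma forward_alg a b theta (r : rat) (y : algC) :
  irreducible_poly (f12 a b) -> ev (f12 a b) theta = 0 -> ~ ratsq r ->
  (exists A, y = ev A (theta ^+ 3)) -> ratr r = y ^+ 2 ->
  ratsq (r * (a ^+ 2 - 4%:R * b))
  \/ (exists s w : rat, b = s ^+ 2 /\ r * (- a - 2%:R * s) = w ^+ 2).
Proof.
move=> Hi Hr Hns [A EA] Hy.
have Hb := Hb_of _ _ _ Hr.
have [p0 [q0 [p1 [q1 E]]]] := rep4 _ _ _ A Hr.
rewrite E in EA; clear E.
case: (ind4 _ _ _
  (p0 ^+ 2 - b * p1 ^+ 2 + a * b * q1 ^+ 2 - 2%:R * b * q0 * q1 - r)
  (2%:R * (p0 * q0 - b * p1 * q1))
  (2%:R * p0 * p1 - a * p1 ^+ 2 + q0 ^+ 2 - 2%:R * a * q0 * q1 + (a ^+ 2 - b) * q1 ^+ 2)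
  (2%:R * (p0 * q1 + p1 * q0 - a * p1 * q1)) Hi Hr) => [|C0 D0 C1 D1].
  have -> : (0:algC) = y ^+ 2 - ratr r by rewrite Hy subrr.
  rewrite EA; rewrite !(rmorphB, rmorphD, rmorphM, rmorphXn, rmorph_nat, rmorph1) /= Hb.
  move: (ratr p0) (ratr p1) (ratr q0) (ratr q1) (ratr a) (ratr r) => x0 x1 x2 x3 x4 x5.
  ring.
have two0 : (2%:R : rat) != 0 by [].
have X0 : p0 * q0 - b * p1 * q1 = 0.
  by move/eqP: D0; rewrite mulf_eq0 (negPf two0) /= => /eqP.
have X1 : p0 * q1 + p1 * q0 - a * p1 * q1 = 0.
  by move/eqP: D1; rewrite mulf_eq0 (negPf two0) /= => /eqP.
have Hab : (ratr p0 + ratr p1 * theta ^+ 6) * (ratr q0 + ratr q1 * theta ^+ 6) = 0 :> algC.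
  have -> : (ratr p0 + ratr p1 * theta ^+ 6) * (ratr q0 + ratr q1 * theta ^+ 6) =
     ratr (p0 * q0 - b * p1 * q1) + ratr (p0 * q1 + p1 * q0 - a * p1 * q1) * theta ^+ 6 :> algC.
    rewrite !(rmorphB, rmorphD, rmorphM) /= Hb.
    move: (ratr p0) (ratr p1) (ratr q0) (ratr q1) (ratr a) => x0 x1 x2 x3 x4.
    ring.
  by rewrite X0 X1 rmorph0 mul0r addr0.
move/eqP: Hab; rewrite mulf_eq0 => /orP [] /eqP H.
  case: (ind4 _ _ _ p0 0 p1 0 Hi Hr) => [|P0 _ P1 _].
    by rewrite rmorph0 !mul0r !addr0.
  right; subst p0 p1.
  have q1n0 : q1 != 0.
    apply/negP => /eqP q10; subst q1; apply: Hns.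
    have q00 : q0 = 0.
      apply/eqP; rewrite -sqrf_eq0; apply/eqP; rewrite -[RHS]C1; ring.
    subst q0; exists 0. apply: (eq_from0 (-1) C0); ring.
  have [s Eq0] : exists s, q0 = (s + a) * q1 by exists (q0 / q1 - a); field.
  subst q0.
  have Hbs : b = s ^+ 2.
    apply: (mulIf (expf_neq0 2 q1n0)); apply: (eq_from0 (-1) C1); ring.
  subst b.
  have Er : s ^+ 2 * q1 ^+ 2 * (- a - 2%:R * s) = r by apply: (eq_from0 1 C0); ring.
  exists s, (s * q1 * (- a - 2%:R * s)); split => //; rewrite -Er; ring.
case: (ind4 _ _ _ q0 0 q1 0 Hi Hr) => [|Q0 _ Q1 _].
  by rewrite rmorph0 !mul0r !addr0.
left; subst q0 q1.
have p1n0 : p1 != 0.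
  apply/negP => /eqP p10; subst p1; apply: Hns.
  exists p0; symmetry; apply: (eq_from0 1 C0); ring.
have [t Ep0] : exists t, p0 = t * p1 by exists (p0 / p1); field.
subst p0.
have Ea : a = 2%:R * t.
  apply: (mulIf (expf_neq0 2 p1n0)); apply: (eq_from0 (-1) C1); ring.
subst a.
have Er : p1 ^+ 2 * (t ^+ 2 - b) = r by apply: (eq_from0 1 C0); ring.
exists (2%:R * p1 * (t ^+ 2 - b)); rewrite -Er; ring.
Qed.


Lemma eqC_from0 (k : algC) {x y z : algC} : z = 0 -> x - y = k * z -> x = y.
Proof. by move=> -> /eqP; rewrite mulr0 subr_eq0 => /eqP. Qed.

Lemma theta_neq0 a b theta :
  irreducible_poly (f12 a b) -> ev (f12 a b) theta = 0 -> theta != 0.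
Proof.
move=> Hi Hr; apply/negP => /eqP t0.
have := K12 _ _ _ 'X Hi Hr; rewrite size_polyX evX t0 => /(_ isT erefl) /eqP.
by rewrite polyX_eq0.
Qed.

Lemma back1 a b theta (r q : rat) :
  irreducible_poly (f12 a b) -> ev (f12 a b) theta = 0 ->
  r * (a ^+ 2 - 4%:R * b) = q ^+ 2 ->
  exists y : algC, in_Qadj theta y /\ ratr r = y ^+ 2.
Proof.
move=> Hi Hr Hrq.
have Hb := Hb_of _ _ _ Hr.
set d := a ^+ 2 - 4%:R * b in Hrq.
set z : algC := 2%:R * theta ^+ 6 + ratr a.
have Hz : z ^+ 2 = ratr d.
  rewrite /z /d !(rmorphB, rmorphD, rmorphM, rmorphXn, rmorph_nat) /= Hb.
  move: (ratr a) => x; ring.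
have hEz : ev (2%:R *: 'X^6 + a%:P) theta = z by rewrite evD evZ evXn evC rmorph_nat.
have dn0 : d != 0.
  apply/negP => /eqP d0.
  have z0 : z = 0 by apply/eqP; rewrite -sqrf_eq0 Hz d0 rmorph0.
  have hS : (size ((2%:R *: 'X^6 + a%:P)%R : {poly rat}) <= 12)%N.
    apply: leq_trans (size_polyD _ _) _; rewrite geq_max.
    apply/andP; split; last by apply: leq_trans (size_polyC_leq1 _) _.
    by apply: leq_trans (size_scale_leq _ _) _; rewrite size_polyXn.
  have hE : ev (2%:R *: 'X^6 + a%:P) theta = 0.
    by rewrite hEz z0.
  have H := K12 _ _ _ _ Hi Hr hS hE.
  have : (2%:R *: 'X^6 + a%:P : {poly rat})`_6 = 0 by rewrite H coef0.
  by rewrite coefD coefZ coefXn coefC /= mulr1 addr0.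
have zn0 : z != 0.
  by rewrite -sqrf_eq0 Hz fmorph_eq0.
exists (ratr q / z); split.
  exists q%:P, (2%:R *: 'X^6 + a%:P).
  change (ev (2%:R *: 'X^6 + a%:P) theta != 0 /\ ratr q / z = ev q%:P theta / ev (2%:R *: 'X^6 + a%:P) theta).
  by rewrite hEz evC.
have Er : r = q ^+ 2 / d by rewrite -Hrq mulfK.
by rewrite Er expr_div_n Hz rmorphM rmorphV ?unitfE //= rmorphXn.
Qed.

Lemma back2 a b theta (r q s : rat) :
  irreducible_poly (f12 a b) -> ev (f12 a b) theta = 0 -> r != 0 ->
  s ^+ 2 = b -> r * (- a + 2%:R * s) = q ^+ 2 ->
  exists y : algC, in_Qadj theta y /\ ratr r = y ^+ 2.
Proof.
move=> Hi Hr rn0 Hsb Hrq.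
have tn0 := theta_neq0 _ _ _ Hi Hr.
have Hz : theta ^+ 12 + ratr a * theta ^+ 6 + ratr s ^+ 2 = 0.
  by rewrite -rmorphXn Hsb -ev_f12.
have evP : ev ('X^6 + s%:P) theta = theta ^+ 6 + ratr s by rewrite evD evXn evC.
have qn0 : q != 0.
  apply/negP => /eqP q0; subst q.
  move/eqP: Hrq; rewrite expr0n /= mulf_eq0 (negPf rn0) /= => /eqP H.
  have Ea : a = 2%:R * s by apply: (eq_from0 (-1) H); ring.
  subst a.
  have h0 : ev ('X^6 + s%:P) theta = 0.
    apply/eqP; rewrite evP -sqrf_eq0; apply/eqP.
    apply: (eqC_from0 1 Hz); rewrite rmorphM rmorph_nat /=.
    move: (ratr s) => x; ring.
  have hS : (size (('X^6 + s%:P)%R : {poly rat}) <= 12)%N by rewrite size_XnaddC.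
  have H0 := K12 _ _ _ _ Hi Hr hS h0.
  have : (('X^6 + s%:P)%R : {poly rat})`_6 = 0 by rewrite H0 coef0.
  by rewrite coefD coefXn coefC /= addr0 => /eqP; rewrite oner_eq0.
have Hq2 : ratr q ^+ 2 = ratr r * (- ratr a + 2%:R * ratr s) :> algC.
  by rewrite -rmorphXn -Hrq !(rmorphM, rmorphD, rmorphN, rmorph_nat).
have key : ratr r ^+ 2 * (theta ^+ 6 + ratr s) ^+ 2 = ratr r * ratr q ^+ 2 * theta ^+ 6 :> algC.
  rewrite Hq2; apply: (eqC_from0 (ratr r ^+ 2) Hz).
  move: (ratr r) (ratr s) (ratr a) => x1 x2 x3; ring.
exists (ratr r * (theta ^+ 6 + ratr s) / (ratr q * theta ^+ 3)); split.
  exists (r *: ('X^6 + s%:P)), (q *: 'X^3).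
  change (ev (q *: 'X^3) theta != 0 /\ ratr r * (theta ^+ 6 + ratr s) / (ratr q * theta ^+ 3)
     = ev (r *: ('X^6 + s%:P)) theta / ev (q *: 'X^3) theta).
  rewrite !evZ evXn evP; split => //.
  by rewrite mulf_eq0 negb_or fmorph_eq0 qn0 expf_neq0.
rewrite expr_div_n exprMn key.
have qn0' : (ratr q : algC) != 0 by rewrite fmorph_eq0.
move: (ratr r) (ratr q) qn0' => x y yn0.
field.
by rewrite yn0 tn0.
Qed.


Lemma ratr_sq_of (x w : rat) (t : algC) : x = w ^+ 2 -> ratr x = t -> algC_in_Qsq t.
Proof. by move=> -> <-; exists w; rewrite rmorphXn. Qed.

Lemma back2C a b theta (r q : rat) (t : algC) :
  irreducible_poly (f12 a b) -> ev (f12 a b) theta = 0 -> r != 0 ->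
  t ^+ 2 = ratr b -> ratr r * (- ratr a + 2%:R * t) = ratr q ^+ 2 ->
  exists y : algC, in_Qadj theta y /\ ratr r = y ^+ 2.
Proof.
move=> Hi Hr rn0 Ht Hq.
have rn0' : (ratr r : algC) != 0 by rewrite fmorph_eq0.
have Es : ratr ((q ^+ 2 / r + a) / 2%:R) = t.
  rewrite !(rmorphM, rmorphD, rmorphV, rmorphXn, rmorph_nat) ?unitfE //=.
  rewrite -Hq; move: (ratr r) (ratr a) rn0' => x1 x2 xn0; field.
  exact: xn0.
move: ((q ^+ 2 / r + a) / 2%:R) Es => s Es.
apply: (back2 _ _ _ r q s Hi Hr rn0).
  by apply: (fmorph_inj (@ratr algC)); rewrite rmorphXn /= Es Ht.
apply: (fmorph_inj (@ratr algC)).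
by rewrite rmorphXn -Hq !(rmorphM, rmorphD, rmorphN, rmorph_nat) /= Es rmorph1.
Qed.

Theorem proposition3p3 (a b : rat) (theta : algC) :
  irreducible_poly (f12 a b) ->
  root (map_poly ratr (f12 a b)) theta ->
  forall r : rat, ~ ratsq r ->
    ((exists y : algC, in_Qadj theta y /\ ratr r = y ^+ 2) <->
     (ratsq (r * (a ^+ 2 - 4%:R * b))
      \/ algC_in_Qsq (ratr r * (- ratr a + 2%:R * sqrtC (ratr b)))
      \/ algC_in_Qsq (ratr r * (- ratr a - 2%:R * sqrtC (ratr b))))).
Proof.
move=> Hi Hroot r Hns.
have Hr : ev (f12 a b) theta = 0 by apply/eqP; exact: Hroot.
have rn0 : r != 0 by apply/negP => /eqP r0; apply: Hns; exists 0; rewrite r0 expr0n.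
split.
  move=> [y [Hin Hy]]; move: Hin; rewrite /in_Qadj => -[p [q [Hq Ey]]].
  have {}Hq : ev q theta != 0 := Hq.
  have {}Ey : y = ev p theta / ev q theta := Ey.
  have [v Hv] := ev_inv _ _ _ _ Hi Hr Hq.
  have Ey' : y = ev (p * v) theta.
    by rewrite Ey evM; apply: (mulIf Hq); rewrite divfK // -mulrA Hv mulr1.
  have HA : exists A, y = ev A (theta ^+ 3).
    rewrite Ey'; apply: (step3 _ _ _ _ r Hi Hr); by rewrite -Ey'.
  case: (forward_alg _ _ _ _ _ Hi Hr Hns HA Hy) => [H|[s [w [Hbs Hrw]]]].
    by left.
  right.
  case: (sqrt_cases _ _ Hbs) => ->.
    right; apply: (ratr_sq_of _ _ _ Hrw).
    by rewrite !(rmorphM, rmorphB, rmorphN, rmorph_nat).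
  left; apply: (ratr_sq_of _ _ _ Hrw).
  rewrite !(rmorphM, rmorphB, rmorphN, rmorph_nat) /=.
  move: (ratr r) (ratr a) (ratr s) => x1 x2 x3; ring.
case=> [[q Hq]|[[q Hq]|[q Hq]]].
- exact: (back1 _ _ _ _ _ Hi Hr Hq).
- by apply: (back2C _ _ _ _ q _ Hi Hr rn0 _ Hq); rewrite sqrtCK.
- apply: (back2C _ _ _ _ q (- sqrtC (ratr b)) Hi Hr rn0); first by rewrite sqrrN sqrtCK.
  by rewrite mulrN -Hq.
Qed.
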